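(* For all (possibly open) terms $t_0,t_1$ of $\lambda_S$, if $t_0$ and $t_1$ are CPS equivalent then $t_0\;(\approx^p_\emptyset)^{\circ}\;t_1$.
   Context: Terms of $\lambda_S$: $t ::= x \mid \lambda x.t \mid t\,t \mid \mathcal{S}k.t \mid \langle t\rangle$ (shift binds $k$; $\langle\cdot\rangle$ reset), up to $\alpha$-conversion; $\mathrm{fv}(t)$ free variables. Values $v::=\lambda x.t$. Pure contexts $E ::= \Box \mid v\,E \mid E\,t$; evaluation contexts $F ::= \Box \mid v\,F \mid F\,t \mid \langle F\rangle$. Reduction: $F[(\lambda x.t)v]\to F[t\{v/x\}]$; $F[\langle E[\mathcal Sk.t]\rangle]\to F[\langle t\{\lambda x.\langle E[x]\rangle/k\}\rangle]$ ($x\notin\mathrm{fv}(E)$); $F[\langle v\rangle]\to F[v]$; $\to^*$ reflexive-transitive closure. Program: term $\langle t\rangle$ (ranged over by $p$). CPS equivalence: $t_0,t_1$ are CPS equivalent if their (Danvy–Filinski call-by-value) CPS translations are $\beta\eta$-convertible; equivalently (Kameyama–Hasegawa), if $t_0=t_1$ is derivable in the congruence generated by the axioms (with variables counted as values, $\mathcal{E}$ pure contexts): $(\lambda x.t)v=t\{v/x\}$; $(\lambda x.E[x])t=E[t]$ if $x\notin\mathrm{fv}(E)$; $\langle E[\mathcal Sk.t]\rangle=\langle t\{\lambda x.\langle E[x]\rangle/k\}\rangle$; $\langle(\lambda x.t_0)\langle t_1\rangle\rangle=(\lambda x.\langle t_0\rangle)\langle t_1\rangle$; $\langle v\rangle=v$;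 $\mathcal Sk.\langle t\rangle=\mathcal Sk.t$; $\lambda x.v\,x=v$ if $x\notin\mathrm{fv}(v)$; $\mathcal Sk.(k\,t)=t$ if $k\notin\mathrm{fv}(t)$. Closures: for $R$ a relation on closed terms, $\widetilde R$ is the smallest relation containing $R$, all $(x,x)$, closed under all term constructors, restricted to closed terms; $\widehat R$ is the smallest relation on closed evaluation contexts with $\Box\widehat R\Box$, $v_0F_0\widehat Rv_1F_1$ if $F_0\widehat RF_1,v_0\widetilde Rv_1$; $F_0t_0\widehat RF_1t_1$ if $F_0\widehat RF_1,t_0\widetilde Rt_1$; $\langle F_0\rangle\widehat R\langle F_1\rangle$ if $F_0\widehat RF_1$. Environmental bisimilarity for programs: an environment $\mathcal E$ is a relation on closed values; an environmental relation $\mathcal X$ is a set of environments and triples $(\mathcal E,t_0,t_1)$, $t_0,t_1$ closed, written $t_0\mathcal X_{\mathcal E}t_1$. $\mathcal X$ is an environmental bisimulation for programs if (1) if $t_0\mathcal X_{\mathcal E}t_1$ and $t_0,t_1$ are not both programs, then for all pure $E_0\widehat{\mathcal E}E_1$, $\langle E_0[t_0]\rangle\mathcal X_{\mathcal E}\langle E_1[t_1]\rangle$; (2) if $p_0\mathcal X_{\mathcal E}p_1$: (a) $p_0\to p_0'$ (program) implies $p_1\to^*p_1'$ (program) with $p_0'\mathcal X_{\mathcal E}p_1'$; (b) $p_0\to v_0$ implies $p_1\to^*v_1$ and $\{(v_0,v_1)\}\cup\mathcal E\in\mathcal X$; (c) symmetric conditions; (3) for $\mathcal E\in\mathcal X$,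 $(\lambda x.t_0)\mathcal E(\lambda x.t_1)$ and $v_0\widetilde{\mathcal E}v_1$ imply $t_0\{v_0/x\}\mathcal X_{\mathcal E}t_1\{v_1/x\}$. $\approx^p$ is the largest such relation; $t_0\approx^p_{\emptyset}t_1$ means $(\emptyset,t_0,t_1)\in\approx^p$. Open extension: for terms $t_0,t_1$ with $\vec x=\mathrm{fv}(t_0)\cup\mathrm{fv}(t_1)$, $t_0\,(\approx^p_\emptyset)^\circ\,t_1$ iff $\lambda\vec x.t_0\approx^p_\emptyset\lambda\vec x.t_1$. *)

(* Defs.v *)
(* lambda_S (call-by-value lambda calculus with shift/reset)
   in de Bruijn representation (alpha-conversion built in). *)
From Stdlib Require Import Arith.

Inductive term : Type :=
| Var (n : nat)
| Lam (t : term)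
| App (t u : term)
| Shift (t : term)          (* S k. t : binds k as index 0 *)
| Reset (t : term).

Definition up_ren (xi : nat -> nat) : nat -> nat :=
  fun n => match n with 0 => 0 | S n' => S (xi n') end.

Fixpoint ren (xi : nat -> nat) (t : term) : term :=
  match t with
  | Var n => Var (xi n)
  | Lam t => Lam (ren (up_ren xi) t)
  | App t u => App (ren xi t) (ren xi u)
  | Shift t => Shift (ren (up_ren xi) t)
  | Reset t => Reset (ren xi t)
  end.

Definition lift (t : term) : term := ren S t.

Definition up (sigma : nat -> term) : nat -> term :=
  fun n => match n with 0 => Var 0 | S n' => lift (sigma n') end.

Fixpoint subst (sigma : nat -> term) (t : term) : term :=
  match t with
  | Var n => sigma n
  | Lam t => Lam (subst (up sigma) t)
  | App t u => App (subst sigma t) (subst sigma u)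
  | Shift t => Shift (subst (up sigma) t)
  | Reset t => Reset (subst sigma t)
  end.

(** [subst0 v t] is t{v/x} where x is the variable bound at index 0 *)
Definition subst0 (v t : term) : term :=
  subst (fun n => match n with 0 => v | S n' => Var n' end) t.

Fixpoint closed_at (k : nat) (t : term) : Prop :=
  match t with
  | Var n => n < k
  | Lam t => closed_at (S k) t
  | App t u => closed_at k t /\ closed_at k u
  | Shift t => closed_at (S k) t
  | Reset t => closed_at k t
  end.

Definition closed (t : term) : Prop := closed_at 0 t.

Fixpoint fvbound (t : term) : nat :=
  match t with
  | Var n => S n
  | Lam t => pred (fvbound t)
  | App t u => Nat.max (fvbound t) (fvbound u)
  | Shift t => pred (fvbound t)
  | Reset t => fvbound t
  end.

Definition lams (n : nat) (t : term) : term := Nat.iter n Lam t.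

Definition is_val (t : term) : Prop := exists b, t = Lam b.
(** values of the Kameyama-Hasegawa axioms: variables counted as values *)
Definition kh_val (t : term) : Prop := is_val t \/ exists n, t = Var n.

Inductive ectx : Type :=
| EHole
| EAppR (v : term) (F : ectx)
| EAppL (F : ectx) (t : term)
| EReset (F : ectx).

Fixpoint plug (F : ectx) (t : term) : term :=
  match F with
  | EHole => t
  | EAppR v F => App v (plug F t)
  | EAppL F u => App (plug F t) u
  | EReset F => Reset (plug F t)
  end.

Fixpoint ren_ectx (xi : nat -> nat) (F : ectx) : ectx :=
  match F with
  | EHole => EHole
  | EAppR v F => EAppR (ren xi v) (ren_ectx xi F)
  | EAppL F u => EAppL (ren_ectx xi F) (ren xi u)
  | EReset F => EReset (ren_ectx xi F)
  end.

Definition lift_ectx (F : ectx) : ectx := ren_ectx S F.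

Fixpoint vals_ok (P : term -> Prop) (F : ectx) : Prop :=
  match F with
  | EHole => True
  | EAppR v F => P v /\ vals_ok P F
  | EAppL F _ => vals_ok P F
  | EReset F => vals_ok P F
  end.

Fixpoint no_reset (F : ectx) : Prop :=
  match F with
  | EHole => True
  | EAppR _ F => no_reset F
  | EAppL F _ => no_reset F
  | EReset _ => False
  end.

Definition eval_ctx (F : ectx) : Prop := vals_ok is_val F.
Definition pure_ctx (E : ectx) : Prop := no_reset E /\ vals_ok is_val E.
Definition kh_pure_ctx (E : ectx) : Prop := no_reset E /\ vals_ok kh_val E.

Inductive contract : term -> term -> Prop :=
| c_beta : forall t v, is_val v -> contract (App (Lam t) v) (subst0 v t)
| c_shift : forall E t, pure_ctx E ->
    contract (Reset (plug E (Shift t)))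
             (Reset (subst0 (Lam (Reset (plug (lift_ectx E) (Var 0)))) t))
| c_reset : forall v, is_val v -> contract (Reset v) v.

Inductive step : term -> term -> Prop :=
| step_ctx : forall F a b, eval_ctx F -> contract a b -> step (plug F a) (plug F b).

Inductive steps : term -> term -> Prop :=
| steps_refl : forall t, steps t t
| steps_cons : forall t u w, step t u -> steps u w -> steps t w.

Definition is_program (t : term) : Prop := exists t', t = Reset t'.

Inductive cps_eq : term -> term -> Prop :=
| ce_refl : forall t, cps_eq t t
| ce_sym : forall t u, cps_eq t u -> cps_eq u t
| ce_trans : forall t u w, cps_eq t u -> cps_eq u w -> cps_eq t w
| ce_lam : forall t u, cps_eq t u -> cps_eq (Lam t) (Lam u)
| ce_app : forall t t' u u', cps_eq t t' -> cps_eq u u' -> cps_eq (App t u) (App t' u')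
| ce_shift : forall t u, cps_eq t u -> cps_eq (Shift t) (Shift u)
| ce_reset : forall t u, cps_eq t u -> cps_eq (Reset t) (Reset u)
| ax_beta_v : forall t v, kh_val v -> cps_eq (App (Lam t) v) (subst0 v t)
(* (lambda x.E[x]) t = E[t],  x notin fv(E) *)
| ax_beta_omega : forall E t, kh_pure_ctx E ->
    cps_eq (App (Lam (plug (lift_ectx E) (Var 0))) t) (plug E t)
(* <E[S k.t]> = <t{lambda x.<E[x]>/k}> *)
| ax_reset_shift : forall E t, kh_pure_ctx E ->
    cps_eq (Reset (plug E (Shift t)))
           (Reset (subst0 (Lam (Reset (plug (lift_ectx E) (Var 0)))) t))
| ax_reset_lift : forall t0 t1,
    cps_eq (Reset (App (Lam t0) (Reset t1))) (App (Lam (Reset t0)) (Reset t1))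
| ax_reset_val : forall v, kh_val v -> cps_eq (Reset v) v
| ax_shift_reset : forall t, cps_eq (Shift (Reset t)) (Shift t)
(* lambda x. v x = v,  x notin fv(v) *)
| ax_eta_v : forall v, kh_val v -> cps_eq (Lam (App (lift v) (Var 0))) v
(* S k.(k t) = t,  k notin fv(t) *)
| ax_shift_elim : forall t, cps_eq (Shift (App (Var 0) (lift t))) t.

Definition rel := term -> term -> Prop.

Inductive ctx_clo (R : rel) : term -> term -> Prop :=
| cc_base : forall t u, R t u -> ctx_clo R t u
| cc_var : forall n, ctx_clo R (Var n) (Var n)
| cc_lam : forall t u, ctx_clo R t u -> ctx_clo R (Lam t) (Lam u)
| cc_app : forall t t' u u', ctx_clo R t t' -> ctx_clo R u u' ->
    ctx_clo R (App t u) (App t' u')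
| cc_shift : forall t u, ctx_clo R t u -> ctx_clo R (Shift t) (Shift u)
| cc_reset : forall t u, ctx_clo R t u -> ctx_clo R (Reset t) (Reset u).

Definition tilde (R : rel) : rel :=
  fun t u => ctx_clo R t u /\ closed t /\ closed u.

Inductive hat (R : rel) : ectx -> ectx -> Prop :=
| hat_hole : hat R EHole EHole
| hat_appr : forall v0 v1 F0 F1, is_val v0 -> is_val v1 ->
    hat R F0 F1 -> tilde R v0 v1 -> hat R (EAppR v0 F0) (EAppR v1 F1)
| hat_appl : forall F0 F1 t0 t1,
    hat R F0 F1 -> tilde R t0 t1 -> hat R (EAppL F0 t0) (EAppL F1 t1)
| hat_reset : forall F0 F1, hat R F0 F1 -> hat R (EReset F0) (EReset F1).

Definition is_env (E : rel) : Prop :=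
  forall a b, E a b -> is_val a /\ closed a /\ is_val b /\ closed b.

Record env_relation : Type := {
  envs : rel -> Prop;
  trip : rel -> term -> term -> Prop
}.

Definition well_formed (X : env_relation) : Prop :=
  (forall E, envs X E -> is_env E) /\
  (forall E t0 t1, trip X E t0 t1 -> is_env E /\ closed t0 /\ closed t1).

Definition add_pair (v0 v1 : term) (E : rel) : rel :=
  fun a b => (a = v0 /\ b = v1) \/ E a b.

Definition env_bisim (X : env_relation) : Prop :=
  well_formed X /\
  (forall E t0 t1, trip X E t0 t1 -> ~ (is_program t0 /\ is_program t1) ->
     forall E0 E1, no_reset E0 -> no_reset E1 -> hat E E0 E1 ->
     trip X E (Reset (plug E0 t0)) (Reset (plug E1 t1))) /\
  (forall E p0 p1, trip X E p0 p1 -> is_program p0 -> is_program p1 ->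
     (forall p0', step p0 p0' -> is_program p0' ->
        exists p1', steps p1 p1' /\ is_program p1' /\ trip X E p0' p1') /\
     (forall v0, step p0 v0 -> is_val v0 ->
        exists v1, steps p1 v1 /\ is_val v1 /\ envs X (add_pair v0 v1 E)) /\
     (forall p1', step p1 p1' -> is_program p1' ->
        exists p0', steps p0 p0' /\ is_program p0' /\ trip X E p0' p1') /\
     (forall v1, step p1 v1 -> is_val v1 ->
        exists v0, steps p0 v0 /\ is_val v0 /\ envs X (add_pair v0 v1 E))) /\
  (forall E t0 t1 v0 v1, envs X E -> E (Lam t0) (Lam t1) ->
     is_val v0 -> is_val v1 -> tilde E v0 v1 ->
     trip X E (subst0 v0 t0) (subst0 v1 t1)).

Definition bisim_p (E : rel) (t0 t1 : term) : Prop :=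
  exists X, env_bisim X /\ trip X E t0 t1.

Definition empty_env : rel := fun _ _ => False.

Definition bisim_p_empty (t0 t1 : term) : Prop := bisim_p empty_env t0 t1.

Definition open_ext (R : rel) (t0 t1 : term) : Prop :=
  let n := Nat.max (fvbound t0) (fvbound t1) in
  R (lams n t0) (lams n t1).

(* Main.v *)
Require Import Defs.
From Stdlib Require Import Arith Lia.

Definition scons (v : term) (s : nat -> term) (n : nat) : term :=
  match n with 0 => v | S n' => s n' end.

Lemma ren_ext : forall t xi zeta, (forall n, xi n = zeta n) -> ren xi t = ren zeta t.
Proof.
  induction t; intros xi zeta H; simpl; f_equal; auto;
  try (apply IHt; intros [|n]; simpl; auto).
Qed.

Lemma subst_ext : forall t s s', (forall n, s n = s' n) -> subst s t = subst s' t.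
Proof.
  induction t; intros s s' H; simpl; f_equal; auto;
  try (apply IHt; intros [|n]; simpl; auto; unfold lift; rewrite H; auto).
Qed.

Lemma ren_ren : forall t xi zeta, ren xi (ren zeta t) = ren (fun n => xi (zeta n)) t.
Proof.
  induction t; intros xi zeta; simpl; f_equal; auto;
  rewrite IHt; apply ren_ext; intros [|n]; reflexivity.
Qed.

Lemma subst_ren : forall t s xi, subst s (ren xi t) = subst (fun n => s (xi n)) t.
Proof.
  induction t; intros s xi; simpl; f_equal; auto;
  rewrite IHt; apply subst_ext; intros [|n]; reflexivity.
Qed.

Lemma ren_subst : forall t s xi, ren xi (subst s t) = subst (fun n => ren xi (s n)) t.
Proof.
  induction t; intros s xi; simpl; f_equal; auto;
  rewrite IHt; apply subst_ext; intros [|n]; simpl; auto;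
  unfold lift; rewrite !ren_ren; apply ren_ext; intros; reflexivity.
Qed.

Lemma up_comp : forall s t n,
  subst (up t) (up s n) = up (fun m => subst t (s m)) n.
Proof.
  intros s t [|n]; simpl; auto. unfold lift.
  rewrite subst_ren, ren_subst. apply subst_ext; intros; reflexivity.
Qed.

Lemma subst_subst : forall t s s', subst s' (subst s t) = subst (fun n => subst s' (s n)) t.
Proof.
  induction t; intros s s'; simpl; f_equal; auto;
  rewrite IHt; apply subst_ext; intros n; apply up_comp.
Qed.

Lemma subst_var : forall t, subst Var t = t.
Proof.
  induction t; simpl; f_equal; auto;
  rewrite <- IHt at 2; apply subst_ext; intros [|n]; reflexivity.
Qed.

Lemma subst0_lift : forall v t, subst0 v (lift t) = t.
Proof.
  intros. unfold subst0, lift. rewrite subst_ren. apply subst_var.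
Qed.

Lemma subst0_up : forall w g t, subst0 w (subst (up g) t) = subst (scons w g) t.
Proof.
  intros. unfold subst0. rewrite subst_subst. apply subst_ext.
  intros [|n]; simpl; auto. apply subst0_lift.
Qed.

Lemma subst_subst0 : forall g v t,
  subst g (subst0 v t) = subst0 (subst g v) (subst (up g) t).
Proof.
  intros. rewrite subst0_up. unfold subst0. rewrite subst_subst.
  apply subst_ext. intros [|n]; reflexivity.
Qed.

Lemma subst_up_lift : forall g t, subst (up g) (lift t) = lift (subst g t).
Proof.
  intros. unfold lift. rewrite subst_ren, ren_subst. apply subst_ext; reflexivity.
Qed.

Fixpoint subst_ectx (s : nat -> term) (F : ectx) : ectx :=
  match F with
  | EHole => EHole
  | EAppR v F => EAppR (subst s v) (subst_ectx s F)
  | EAppL F u => EAppL (subst_ectx s F) (subst s u)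
  | EReset F => EReset (subst_ectx s F)
  end.

Lemma subst_plug : forall s F t, subst s (plug F t) = plug (subst_ectx s F) (subst s t).
Proof. induction F; intros; simpl; f_equal; auto. Qed.

Lemma subst_lift_ectx : forall s F,
  subst_ectx (up s) (lift_ectx F) = lift_ectx (subst_ectx s F).
Proof.
  induction F; unfold lift_ectx in *; simpl; rewrite ?IHF; f_equal;
  try exact (subst_up_lift _ _); reflexivity.
Qed.

Lemma subst_cont : forall s F,
  subst (up s) (plug (lift_ectx F) (Var 0)) = plug (lift_ectx (subst_ectx s F)) (Var 0).
Proof. intros. rewrite subst_plug, subst_lift_ectx. reflexivity. Qed.

Lemma subst0_lift_ectx : forall w F, subst_ectx (fun n => match n with 0 => w | S n' => Var n' end) (lift_ectx F) = F.
Proof.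
  induction F; unfold lift_ectx in *; simpl; rewrite ?IHF; f_equal;
  try exact (subst0_lift _ _); reflexivity.
Qed.

Lemma subst0_cont : forall w F, subst0 w (plug (lift_ectx F) (Var 0)) = plug F w.
Proof.
  intros. unfold subst0. rewrite subst_plug. rewrite subst0_lift_ectx. reflexivity.
Qed.

Fixpoint ecomp (F G : ectx) : ectx :=
  match F with
  | EHole => G
  | EAppR v F => EAppR v (ecomp F G)
  | EAppL F u => EAppL (ecomp F G) u
  | EReset F => EReset (ecomp F G)
  end.

Lemma plug_ecomp : forall F G t, plug (ecomp F G) t = plug F (plug G t).
Proof. induction F; intros; simpl; f_equal; auto. Qed.

Lemma vals_ok_ecomp : forall P F G, vals_ok P F -> vals_ok P G -> vals_ok P (ecomp F G).
Proof. induction F; simpl; intuition. Qed.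

Lemma no_reset_ecomp : forall F G, no_reset F -> no_reset G -> no_reset (ecomp F G).
Proof. induction F; simpl; intuition. Qed.

Lemma eval_ecomp : forall F G, eval_ctx F -> eval_ctx G -> eval_ctx (ecomp F G).
Proof. intros; apply vals_ok_ecomp; auto. Qed.

Lemma pure_ecomp : forall F G, pure_ctx F -> pure_ctx G -> pure_ctx (ecomp F G).
Proof. intros F G [] []; split; [apply no_reset_ecomp|apply vals_ok_ecomp]; auto. Qed.

Lemma pure_eval : forall E, pure_ctx E -> eval_ctx E.
Proof. intros E []; auto. Qed.

Lemma step_plug : forall F a b, eval_ctx F -> step a b -> step (plug F a) (plug F b).
Proof.
  intros F a b HF H. destruct H as [G x y HG Hc].
  rewrite <- !plug_ecomp. constructor; auto. apply eval_ecomp; auto.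
Qed.

Lemma contract_step : forall a b, contract a b -> step a b.
Proof. intros. apply (step_ctx EHole); simpl; auto. exact I. Qed.

Lemma steps_trans : forall a b c, steps a b -> steps b c -> steps a c.
Proof. intros a b c H; induction H; intros; auto. econstructor; eauto. Qed.

Lemma steps_one : forall a b, step a b -> steps a b.
Proof. intros; econstructor; eauto; constructor. Qed.

Lemma steps_plug : forall F a b, eval_ctx F -> steps a b -> steps (plug F a) (plug F b).
Proof.
  intros F a b HF H; induction H. constructor. econstructor; eauto. apply step_plug; auto.
Qed.

Inductive nsteps : nat -> term -> term -> Prop :=
| ns0 : forall t, nsteps 0 t t
| nsS : forall n t u w, step t u -> nsteps n u w -> nsteps (S n) t w.

Lemma steps_nsteps : forall a b, steps a b -> exists n, nsteps n a b.
Proof.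
  intros a b H; induction H. exists 0; constructor.
  destruct IHsteps as [n Hn]. exists (S n). econstructor; eauto.
Qed.

Lemma nsteps_steps : forall n a b, nsteps n a b -> steps a b.
Proof. intros n a b H; induction H; econstructor; eauto. Qed.

Definition redex (a : term) : Prop := exists b, contract a b.

Lemma plug_not_lam : forall F a, (forall b, a <> Lam b) -> forall b, plug F a <> Lam b.
Proof. destruct F; simpl; intros; try discriminate; auto. Qed.

Lemma redex_not_lam : forall a, redex a -> forall b, a <> Lam b.
Proof. intros a [c H]; destruct H; intros; try discriminate. Qed.

Lemma shift_not_lam : forall t b, Shift t <> Lam b.
Proof. discriminate. Qed.

Lemma plug_shift_not_redex : forall E t F a, pure_ctx E -> eval_ctx F -> redex a ->
  plug E (Shift t) <> plug F a.
Proof.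
  induction E; intros t0 F a [HnE HvE] HF Ha; simpl in *.
  - destruct F; simpl; try discriminate.
    intros <-. destruct Ha as [c Hc]; inversion Hc.
  - destruct HvE as [Hv HvE]. destruct F; simpl in *; try discriminate.
    + intros <-. destruct Ha as [c Hc]; inversion Hc; subst.
      destruct H2 as [b' Hb]. revert Hb. apply plug_not_lam. apply shift_not_lam.
    + intros H; injection H; intros H1 H2. destruct HF as [_ HF]. apply (IHE t0 F a); auto. split; auto.
    + intros H; injection H; intros; subst. destruct Hv as [b' Hb].
      revert Hb. apply plug_not_lam. apply redex_not_lam; auto.
  - destruct F; simpl in *; try discriminate.
    + intros <-. destruct Ha as [c Hc]; inversion Hc; subst.
      symmetry in H; revert H. apply plug_not_lam. apply shift_not_lam.
    + intros H; destruct HF as [Hv _]. destruct Hv as [b' Hb].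
      assert (Hc : plug E (Shift t0) = Lam b') by congruence.
      revert Hc. apply plug_not_lam. apply shift_not_lam.
    + intros H; injection H; intros H1. apply (IHE t0 F a); auto. split; auto.
  - destruct HnE.
Qed.

Ltac nvtac :=
  match goal with
  | H : is_val (plug _ _) |- _ =>
      let b := fresh "b" in let Hb := fresh "Hb" in destruct H as [b Hb]; nvtac
  | H : plug _ _ = Lam _ |- _ => exfalso; revert H; apply plug_not_lam;
      first [apply redex_not_lam; assumption | apply shift_not_lam]
  | H : Lam _ = plug _ _ |- _ => symmetry in H; nvtac
  end.

Lemma unique_decomp : forall F1 a1 F2 a2, eval_ctx F1 -> eval_ctx F2 -> redex a1 -> redex a2 ->
  plug F1 a1 = plug F2 a2 -> F1 = F2 /\ a1 = a2.
Proof.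
  induction F1; intros a1 F2 a2 H1 H2 R1 R2 Heq; simpl in *.
  - destruct F2; simpl in *; auto; subst.
    + destruct R1 as [c Hc]; inversion Hc; subst. nvtac.
    + destruct R1 as [c Hc]; inversion Hc; subst. nvtac.
    + destruct R1 as [c Hc]; inversion Hc; subst.
      * match goal with H : plug ?E (Shift ?t) = plug ?F ?a |- _ => exfalso;
        exact (plug_shift_not_redex E t F a ltac:(assumption) ltac:(assumption) ltac:(assumption) H) end.
      * nvtac.
  - destruct H1 as [Hv H1]. destruct F2; simpl in *; try discriminate.
    + subst. destruct R2 as [c Hc]; inversion Hc; subst. nvtac.
    + destruct H2 as [_ H2]. injection Heq; intros E1 E2; subst.
      destruct (IHF1 a1 F2 a2 H1 H2 R1 R2 E1); subst; auto.
    + injection Heq; intros E1 E2; subst. nvtac.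
  - destruct F2; simpl in *; try discriminate.
    + subst. destruct R2 as [c Hc]; inversion Hc; subst. nvtac.
    + destruct H2 as [Hv H2]. injection Heq; intros E1 E2; subst. nvtac.
    + injection Heq; intros E1 E2; subst.
      destruct (IHF1 a1 F2 a2 H1 H2 R1 R2 E2); subst; auto.
  - destruct F2; simpl in *; try discriminate.
    + subst. destruct R2 as [c Hc]; inversion Hc; subst.
      * match goal with H : plug ?E (Shift ?t) = plug ?F ?a |- _ => exfalso;
        exact (plug_shift_not_redex E t F a ltac:(assumption) ltac:(assumption) ltac:(assumption) H) end.
      * nvtac.
    + injection Heq; intros E1; subst.
      destruct (IHF1 a1 F2 a2 H1 H2 R1 R2 E1); subst; auto.
Qed.

Lemma pure_shift_unique : forall E1 t1 E2 t2, pure_ctx E1 -> pure_ctx E2 ->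
  plug E1 (Shift t1) = plug E2 (Shift t2) -> E1 = E2 /\ t1 = t2.
Proof.
  induction E1; intros t1 E2 t2 [N1 V1] [N2 V2] Heq; simpl in *.
  - destruct E2; simpl in *; try discriminate; try contradiction.
    injection Heq; auto.
  - destruct V1 as [Hv V1]. destruct E2; simpl in *; try discriminate; try contradiction.
    + destruct V2 as [_ V2]. injection Heq; intros A B; subst.
      destruct (IHE1 t1 E2 t2) as [-> ->]; auto; split; auto.
    + destruct Hv as [b Hb]. assert (plug E2 (Shift t2) = Lam b) by congruence. nvtac.
  - destruct E2; simpl in *; try discriminate; try contradiction.
    + destruct V2 as [Hv V2]. destruct Hv as [b Hb]. assert (plug E1 (Shift t1) = Lam b) by congruence. nvtac.
    + injection Heq; intros A B; subst.
      destruct (IHE1 t1 E2 t2) as [-> ->]; auto; split; auto.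
  - contradiction.
Qed.

Lemma contract_det : forall a b c, contract a b -> contract a c -> b = c.
Proof.
  intros a b c H1 H2; destruct H1; inversion H2; subst; auto.
  - symmetry in H0. destruct (pure_shift_unique _ _ _ _ H H1 H0) as [-> ->]; auto.
  - nvtac.
  - nvtac.
Qed.

Lemma step_det : forall a b c, step a b -> step a c -> b = c.
Proof.
  intros a b c H1 H2. destruct H1 as [F1 x1 y1 HF1 Hc1].
  inversion H2 as [F2 x2 y2 HF2 Hc2 E1 E2].
  destruct (unique_decomp F1 x1 F2 x2) as [-> ->]; auto.
  exists y1; auto. exists y2; auto.
  rewrite (contract_det _ _ _ Hc1 Hc2); auto.
Qed.

Lemma val_nostep : forall v b, is_val v -> ~ step v b.
Proof.
  intros v b [c ->] H. inversion H; subst. revert H0. apply plug_not_lam.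
  apply redex_not_lam. exists b0; auto.
Qed.

Lemma nsteps_val : forall n v w, is_val v -> nsteps n v w -> n = 0 /\ w = v.
Proof.
  intros n v w Hv H; inversion H; subst; auto. exfalso; eapply val_nostep; eauto.
Qed.

Lemma nsteps_step : forall n a a' v, step a a' -> nsteps n a v -> is_val v ->
  exists n', n = S n' /\ nsteps n' a' v.
Proof.
  intros n a a' v Hs H Hv. inversion H; subst.
  - exfalso; eapply val_nostep; eauto.
  - rewrite (step_det _ _ _ Hs H0). eauto.
Qed.

Lemma cps_plug : forall F a b, cps_eq a b -> cps_eq (plug F a) (plug F b).
Proof.
  induction F; intros; simpl; auto using ce_app, ce_refl, ce_reset.
Qed.

Lemma vals_ok_mono : forall (P Q : term -> Prop) F, (forall t, P t -> Q t) -> vals_ok P F -> vals_ok Q F.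
Proof. induction F; simpl; intuition. Qed.

Lemma pure_kh : forall E, pure_ctx E -> kh_pure_ctx E.
Proof.
  intros E [N V]; split; auto. apply (vals_ok_mono is_val); auto. intros; left; auto.
Qed.

Lemma contract_cps : forall a b, contract a b -> cps_eq a b.
Proof.
  intros a b H; destruct H.
  - apply ax_beta_v. left; auto.
  - apply ax_reset_shift. apply pure_kh; auto.
  - apply ax_reset_val. left; auto.
Qed.

Lemma step_cps : forall a b, step a b -> cps_eq a b.
Proof. intros a b H; destruct H. apply cps_plug, contract_cps; auto. Qed.

Lemma steps_cps : forall a b, steps a b -> cps_eq a b.
Proof.
  intros a b H; induction H. apply ce_refl. eapply ce_trans; eauto. apply step_cps; auto.
Qed.

Definition obs (b : term) : Prop := exists v, steps b v /\ is_val v.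

Definition O (k : nat) (a b : term) : Prop :=
  forall n v, n < k -> nsteps n a v -> is_val v -> obs b.

Section Rels.
Variable Vf : nat -> rel.
Definition Mr k F0 F1 := eval_ctx F0 /\ eval_ctx F1 /\
  forall j, j <= k -> forall w0 w1, Vf j w0 w1 -> O j (plug F0 w0) (plug F1 w1).
Definition Pr k p0 p1 := forall j, j <= k -> forall F0 F1, Mr j F0 F1 ->
  O j (plug F0 p0) (plug F1 p1).
Definition Kr k E0 E1 := pure_ctx E0 /\ pure_ctx E1 /\
  forall j, j <= k -> forall w0 w1, Vf j w0 w1 ->
    Pr j (Reset (plug E0 w0)) (Reset (plug E1 w1)).
Definition Er k t0 t1 := forall j, j <= k -> forall E0 E1, Kr j E0 E1 ->
  Pr j (Reset (plug E0 t0)) (Reset (plug E1 t1)).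
End Rels.

Fixpoint Vall (k : nat) : nat -> rel :=
  match k with
  | 0 => fun _ v0 v1 => is_val v0 /\ is_val v1
  | S k' => fun j => if j <=? k' then Vall k' j else
      fun v0 v1 => Vall k' k' v0 v1 /\
        forall b0 b1, v0 = Lam b0 -> v1 = Lam b1 ->
          forall w0 w1, Vall k' k' w0 w1 -> Er (Vall k') k' (subst0 w0 b0) (subst0 w1 b1)
  end.

Definition V k := Vall k k.

Lemma Vall_le : forall k j, j <= k -> Vall k j = V j.
Proof.
  induction k; intros j Hj.
  - assert (j = 0) by lia; subst; reflexivity.
  - destruct (Nat.eq_dec j (S k)) as [->|Hne]. reflexivity.
    simpl. replace (j <=? k) with true. apply IHk; lia.
    symmetry; apply Nat.leb_le; lia.
Qed.

Section Ext.
Variables Vf Vg : nat -> rel.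
Variable k : nat.
Hypothesis H : forall j, j <= k -> forall a b, Vf j a b <-> Vg j a b.

Lemma Mr_ext : forall i, i <= k -> forall F0 F1, Mr Vf i F0 F1 <-> Mr Vg i F0 F1.
Proof.
  intros i Hi F0 F1; unfold Mr; split; intros [A [B C]]; refine (conj A (conj B _));
  intros j Hj w0 w1 Hw; apply C; auto; apply H; auto; lia.
Qed.

Lemma Pr_ext : forall i, i <= k -> forall p0 p1, Pr Vf i p0 p1 <-> Pr Vg i p0 p1.
Proof.
  intros i Hi p0 p1; unfold Pr; split; intros C j Hj F0 F1 HM; apply C; auto;
  apply (Mr_ext j); auto; lia.
Qed.

Lemma Kr_ext : forall i, i <= k -> forall E0 E1, Kr Vf i E0 E1 <-> Kr Vg i E0 E1.
Proof.
  intros i Hi E0 E1; unfold Kr; split; intros [A [B C]]; refine (conj A (conj B _));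
  intros j Hj w0 w1 Hw; apply (Pr_ext j); try lia; apply C; auto; apply H; auto; lia.
Qed.

Lemma Er_ext : forall i, i <= k -> forall t0 t1, Er Vf i t0 t1 <-> Er Vg i t0 t1.
Proof.
  intros i Hi t0 t1; unfold Er; split; intros C j Hj E0 E1 HK;
  apply (Pr_ext j); try lia; apply C; auto; apply (Kr_ext j); auto; lia.
Qed.
End Ext.

Definition M := Mr V.
Definition P := Pr V.
Definition K := Kr V.
Definition E := Er V.

Lemma V_S : forall k v0 v1, V (S k) v0 v1 <->
  V k v0 v1 /\ forall b0 b1, v0 = Lam b0 -> v1 = Lam b1 ->
    forall w0 w1, V k w0 w1 -> E k (subst0 w0 b0) (subst0 w1 b1).
Proof.
  intros k v0 v1. unfold V at 1.
  assert (Hb : (S k <=? k) = false) by (apply Nat.leb_gt; lia).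
  simpl. simpl in Hb. rewrite Hb. cbv beta iota.
  assert (HE : forall t0 t1, Er (Vall k) k t0 t1 <-> E k t0 t1).
  { intros. apply (Er_ext _ _ k); auto. intros j Hj a b. rewrite Vall_le; auto. tauto. }
  split; intros [A B]; split; auto; intros; apply HE; auto.
Qed.

Lemma V_down : forall k j v0 v1, j <= k -> V k v0 v1 -> V j v0 v1.
Proof.
  induction k; intros j v0 v1 Hj Hv.
  - assert (j = 0) by lia; subst; auto.
  - destruct (Nat.eq_dec j (S k)) as [->|Hne]; auto.
    apply IHk; try lia. apply V_S in Hv; tauto.
Qed.

Lemma V_val : forall k v0 v1, V k v0 v1 -> is_val v0 /\ is_val v1.
Proof. intros. apply (V_down k 0) in H; try lia. exact H. Qed.

Lemma M_down : forall k j F0 F1, j <= k -> M k F0 F1 -> M j F0 F1.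
Proof. unfold M, Mr; intros k j F0 F1 Hj [A [B C]]; refine (conj A (conj B _)). intros; apply C; auto; lia. Qed.
Lemma P_down : forall k j p0 p1, j <= k -> P k p0 p1 -> P j p0 p1.
Proof. unfold P, Pr; intros; apply H0; auto; lia. Qed.
Lemma K_down : forall k j E0 E1, j <= k -> K k E0 E1 -> K j E0 E1.
Proof. unfold K, Kr; intros k j F0 F1 Hj [A [B C]]; refine (conj A (conj B _)). intros; apply C; auto; lia. Qed.
Lemma E_down : forall k j p0 p1, j <= k -> E k p0 p1 -> E j p0 p1.
Proof. unfold E, Er; intros; apply H0; auto; lia. Qed.
Lemma O_down : forall k j a b, j <= k -> O k a b -> O j a b.
Proof. unfold O; intros; eapply H0; eauto; lia. Qed.

Lemma O_0 : forall a b, O 0 a b.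
Proof. unfold O; intros; lia. Qed.

Lemma O_red_l : forall k a a' b, step a a' -> O k a' b -> O k a b.
Proof.
  unfold O; intros k a a' b Hs H n v Hn Hst Hv.
  destruct (nsteps_step _ _ _ _ Hs Hst Hv) as [n' [-> Hn']]. apply (H n' v); auto; lia.
Qed.

Lemma O_red_l_gain : forall k a a' b, step a a' -> O k a' b -> O (S k) a b.
Proof.
  unfold O; intros k a a' b Hs H n v Hn Hst Hv.
  destruct (nsteps_step _ _ _ _ Hs Hst Hv) as [n' [-> Hn']]. apply (H n' v); auto; lia.
Qed.

Lemma O_red_r : forall k a b b', steps b b' -> O k a b' -> O k a b.
Proof.
  unfold O; intros k a b b' Hs H n v Hn Hst Hv.
  destruct (H n v Hn Hst Hv) as [w [Hw Hw']]. exists w; split; auto. eapply steps_trans; eauto.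
Qed.

Lemma P_red_l : forall k p p' q, step p p' -> P k p' q -> P k p q.
Proof.
  unfold P, Pr; intros k p p' q Hs H j Hj F0 F1 HM.
  eapply O_red_l. apply step_plug; [apply HM|exact Hs]. apply H; auto.
Qed.

Lemma P_red_r : forall k p q q', steps q q' -> P k p q' -> P k p q.
Proof.
  unfold P, Pr; intros k p q q' Hs H j Hj F0 F1 HM.
  eapply O_red_r. apply steps_plug; [apply HM|exact Hs]. apply H; auto.
Qed.

Lemma P_red_gain : forall k p p' q q', step p p' -> steps q q' ->
  (forall j, S j <= k -> P j p' q') -> P k p q.
Proof.
  unfold P, Pr; intros k p p' q q' Hs Hq H j Hj F0 F1 HM.
  destruct j. apply O_0.
  eapply O_red_r. apply steps_plug; [apply HM|exact Hq].
  eapply O_red_l_gain. apply step_plug; [apply HM|exact Hs].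
  apply (H j); auto. eapply M_down; [|exact HM]; lia.
Qed.

Lemma plug_comp_reset : forall F E x, plug F (Reset (plug E x)) = plug (ecomp F (EReset E)) x.
Proof. intros; rewrite plug_ecomp; reflexivity. Qed.

Lemma step_reset_plug : forall E a b, pure_ctx E -> contract a b ->
  step (Reset (plug E a)) (Reset (plug E b)).
Proof. intros E a b HE Hc. apply (step_plug (EReset E) a b). apply HE. apply contract_step; auto. Qed.

Lemma M_hole : forall k, M k EHole EHole.
Proof.
  intros k. split; [exact I|split; [exact I|]]. intros j Hj w0 w1 Hw n v Hn Hs Hv.
  exists w1; split; [constructor|]. apply (V_val _ _ _ Hw).
Qed.

Lemma K_hole : forall k, K k EHole EHole.
Proof.
  intros k. split; [split; exact I|split; [split; exact I|]].
  intros j Hj w0 w1 Hw i Hi F0 F1 [HF0 [HF1 HM]]. simpl.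
  destruct (V_val _ _ _ Hw) as [Hv0 Hv1].
  eapply O_red_l. apply step_plug; [exact HF0|apply contract_step; constructor; auto].
  eapply O_red_r. apply steps_plug; [exact HF1|apply steps_one, contract_step; constructor; auto].
  apply HM; auto. eapply V_down; [|exact Hw]; lia.
Qed.

Lemma V_E : forall k w0 w1, V k w0 w1 -> E k w0 w1.
Proof.
  intros k w0 w1 Hw j Hj E0 E1 [_ [_ HK]]. apply HK; auto. eapply V_down; eauto.
Qed.

Lemma E_P : forall k t0 t1, E k t0 t1 -> P k (Reset t0) (Reset t1).
Proof. intros k t0 t1 H. apply (H k (le_n k) EHole EHole (K_hole k)). Qed.

Lemma P_reset_l : forall k p0 p1, P k p0 p1 -> P k (Reset p0) p1.
Proof.
  intros k p0 p1 H j Hj F0 F1 HM.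
  replace (plug F0 (Reset p0)) with (plug (ecomp F0 (EReset EHole)) p0)
    by (rewrite plug_ecomp; reflexivity).
  apply H; auto. destruct HM as [HF0 [HF1 HM]].
  split; [apply eval_ecomp; auto; exact I|split; auto].
  intros i Hi w0 w1 Hw. rewrite plug_ecomp. simpl.
  destruct (V_val _ _ _ Hw) as [Hv0 Hv1].
  eapply O_red_l. apply step_plug; [exact HF0|apply contract_step; constructor; auto].
  apply HM; auto.
Qed.

Lemma P_reset_r : forall k p0 p1, P k p0 p1 -> P k p0 (Reset p1).
Proof.
  intros k p0 p1 H j Hj F0 F1 HM.
  replace (plug F1 (Reset p1)) with (plug (ecomp F1 (EReset EHole)) p1)
    by (rewrite plug_ecomp; reflexivity).
  apply H; auto. destruct HM as [HF0 [HF1 HM]].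
  split; [auto|split; [apply eval_ecomp; auto; exact I|]].
  intros i Hi w0 w1 Hw. rewrite plug_ecomp. simpl.
  destruct (V_val _ _ _ Hw) as [Hv0 Hv1].
  eapply O_red_r. apply steps_plug; [exact HF1|apply steps_one, contract_step; constructor; auto].
  apply HM; auto.
Qed.

Lemma M_compose : forall i j E0 E1 F0 F1, i <= j -> K j E0 E1 -> M i F0 F1 ->
  M i (ecomp F0 (EReset E0)) (ecomp F1 (EReset E1)).
Proof.
  intros i j E0 E1 F0 F1 Hij HK HM.
  destruct HK as [pE0 [pE1 HK]]. destruct HM as [HF0 [HF1 HM']].
  split; [apply eval_ecomp; auto; apply pE0|split; [apply eval_ecomp; auto; apply pE1|]].
  intros h Hh u0 u1 Hu. rewrite !plug_ecomp. simpl.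
  apply (HK h); try lia; auto. eapply M_down; [|split; [exact HF0|split; [exact HF1|exact HM']]]; lia.
Qed.

Lemma Kplug_E : forall k E0 E1 w0 w1, K k E0 E1 -> V k w0 w1 ->
  E k (Reset (plug E0 w0)) (Reset (plug E1 w1)).
Proof.
  intros k E0 E1 w0 w1 HK Hw j Hj Ea Eb HKab i Hi F0 F1 HM.
  rewrite (plug_comp_reset F0 Ea), (plug_comp_reset F1 Eb).
  destruct HK as [_ [_ HK]].
  apply (HK i); try lia. eapply V_down; [|exact Hw]; lia.
  apply (M_compose i j); auto.
Qed.

Lemma cont_V : forall k E0 E1, K k E0 E1 ->
  V k (Lam (Reset (plug (lift_ectx E0) (Var 0)))) (Lam (Reset (plug (lift_ectx E1) (Var 0)))).
Proof.
  induction k; intros E0 E1 HK.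
  - unfold V; simpl. split; eexists; eauto.
  - apply V_S. split. apply IHk. eapply K_down; [|exact HK]; lia.
    intros b0 b1 e0 e1 w0 w1 Hw. injection e0; injection e1; intros <- <-.
    change (E k (Reset (subst0 w0 (plug (lift_ectx E0) (Var 0))))
                (Reset (subst0 w1 (plug (lift_ectx E1) (Var 0))))).
    rewrite !subst0_cont. apply Kplug_E; auto. eapply K_down; [|exact HK]; lia.
Qed.

Lemma beta_P : forall k w0 w1 x0 x1 E0 E1, V k w0 w1 -> V k x0 x1 -> K k E0 E1 ->
  P k (Reset (plug E0 (App w0 x0))) (Reset (plug E1 (App w1 x1))).
Proof.
  intros k w0 w1 x0 x1 E0 E1 Hw Hx HK.
  destruct (V_val _ _ _ Hw) as [[b0 ->] [b1 ->]].
  destruct (V_val _ _ _ Hx) as [Hx0 Hx1].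
  eapply P_red_gain.
  - apply step_reset_plug; [apply HK|]. constructor; auto.
  - apply steps_one, step_reset_plug; [apply HK|]. constructor; auto.
  - intros j Hj. assert (HwS : V (S j) (Lam b0) (Lam b1)) by (eapply V_down; eauto).
    apply V_S in HwS. destruct HwS as [_ HE].
    apply (HE b0 b1 eq_refl eq_refl x0 x1); auto.
    eapply V_down; [|exact Hx]; lia.
    eapply K_down; [|exact HK]; lia.
Qed.

Lemma E_app : forall k a0 a1 c0 c1, E k a0 a1 -> E k c0 c1 -> E k (App a0 c0) (App a1 c1).
Proof.
  intros k a0 a1 c0 c1 Ha Hc j Hj E0 E1 HK.
  replace (plug E0 (App a0 c0)) with (plug (ecomp E0 (EAppL EHole c0)) a0)
    by (rewrite plug_ecomp; reflexivity).
  replace (plug E1 (App a1 c1)) with (plug (ecomp E1 (EAppL EHole c1)) a1)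
    by (rewrite plug_ecomp; reflexivity).
  apply Ha; auto. pose proof HK as HK'. destruct HK' as [pE0 [pE1 _]].
  split; [apply pure_ecomp; auto; split; exact I|].
  split; [apply pure_ecomp; auto; split; exact I|].
  intros h Hh w0 w1 Hw. rewrite !plug_ecomp. simpl.
  destruct (V_val _ _ _ Hw) as [Hv0 Hv1].
  replace (plug E0 (App w0 c0)) with (plug (ecomp E0 (EAppR w0 EHole)) c0)
    by (rewrite plug_ecomp; reflexivity).
  replace (plug E1 (App w1 c1)) with (plug (ecomp E1 (EAppR w1 EHole)) c1)
    by (rewrite plug_ecomp; reflexivity).
  apply Hc; try lia.
  split; [apply pure_ecomp; auto; split; simpl; auto|].
  split; [apply pure_ecomp; auto; split; simpl; auto|].
  intros g Hg x0 x1 Hx. rewrite !plug_ecomp. simpl.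
  apply beta_P; auto. eapply V_down; [|exact Hw]; lia.
  eapply K_down; [|exact HK]; lia.
Qed.

Lemma E_reset : forall k a0 a1, E k a0 a1 -> E k (Reset a0) (Reset a1).
Proof.
  intros k a0 a1 H j Hj E0 E1 HK i Hi F0 F1 HM.
  rewrite (plug_comp_reset F0 E0), (plug_comp_reset F1 E1).
  apply (E_P j a0 a1 (E_down k j a0 a1 Hj H) i Hi). apply (M_compose i j); auto.
Qed.

Lemma E_contract_l : forall k a a' b, contract a a' -> E k a' b -> E k a b.
Proof.
  intros k a a' b Hc H j Hj E0 E1 HK. eapply P_red_l.
  apply step_reset_plug; [apply HK|exact Hc]. apply H; auto.
Qed.

Lemma E_contract_r : forall k a b b', contract b b' -> E k a b' -> E k a b.
Proof.
  intros k a b b' Hc H j Hj E0 E1 HK. eapply P_red_r.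
  apply steps_one, step_reset_plug; [apply HK|exact Hc]. apply H; auto.
Qed.

Lemma E_shift : forall k a0 a1,
  (forall j, j <= k -> forall c0 c1, V j c0 c1 -> E j (subst0 c0 a0) (subst0 c1 a1)) ->
  E k (Shift a0) (Shift a1).
Proof.
  intros k a0 a1 H j Hj E0 E1 HK. eapply P_red_l.
  apply contract_step, c_shift; apply HK.
  eapply P_red_r. apply steps_one, contract_step, c_shift; apply HK.
  apply E_P. apply H; auto. apply cont_V; auto.
Qed.

Definition Grel k (g0 g1 : nat -> term) := forall n, V k (g0 n) (g1 n).
Definition LR t0 t1 := forall k g0 g1, Grel k g0 g1 -> E k (subst g0 t0) (subst g1 t1).

Lemma Grel_down : forall k j g0 g1, j <= k -> Grel k g0 g1 -> Grel j g0 g1.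
Proof. intros k j g0 g1 Hj H n. eapply V_down; eauto. Qed.

Lemma Grel_scons : forall k g0 g1 w0 w1, V k w0 w1 -> Grel k g0 g1 ->
  Grel k (scons w0 g0) (scons w1 g1).
Proof. intros k g0 g1 w0 w1 Hw Hg [|n]; simpl; auto. Qed.

Lemma LR_lamV : forall t0 t1, LR t0 t1 -> forall k g0 g1, Grel k g0 g1 ->
  V k (Lam (subst (up g0) t0)) (Lam (subst (up g1) t1)).
Proof.
  intros t0 t1 H. induction k; intros g0 g1 Hg.
  - unfold V; simpl. split; eexists; eauto.
  - apply V_S. split. apply IHk. eapply Grel_down; [|exact Hg]; lia.
    intros b0 b1 e0 e1 w0 w1 Hw. injection e0; injection e1; intros <- <-.
    rewrite !subst0_up. apply H. apply Grel_scons; auto. eapply Grel_down; [|exact Hg]; lia.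
Qed.

Lemma LR_lam : forall t0 t1, LR t0 t1 -> LR (Lam t0) (Lam t1).
Proof. intros t0 t1 H k g0 g1 Hg. apply V_E. apply LR_lamV; auto. Qed.

Lemma LR_var : forall n, LR (Var n) (Var n).
Proof. intros n k g0 g1 Hg. apply V_E. apply Hg. Qed.

Lemma LR_app : forall a0 a1 c0 c1, LR a0 a1 -> LR c0 c1 -> LR (App a0 c0) (App a1 c1).
Proof. intros a0 a1 c0 c1 Ha Hc k g0 g1 Hg. apply E_app; auto. Qed.

Lemma LR_reset : forall a0 a1, LR a0 a1 -> LR (Reset a0) (Reset a1).
Proof. intros a0 a1 Ha k g0 g1 Hg. apply E_reset; auto. Qed.

Lemma LR_shift : forall a0 a1, LR a0 a1 -> LR (Shift a0) (Shift a1).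
Proof.
  intros a0 a1 Ha k g0 g1 Hg. apply E_shift. intros j Hj c0 c1 Hc.
  rewrite !subst0_up. apply Ha. apply Grel_scons; auto. eapply Grel_down; eauto.
Qed.

Lemma LR_refl : forall t, LR t t.
Proof.
  induction t; auto using LR_var, LR_lam, LR_app, LR_reset, LR_shift.
Qed.

Lemma val_V : forall v k g0 g1, kh_val v -> Grel k g0 g1 -> V k (subst g0 v) (subst g1 v).
Proof.
  intros v k g0 g1 [[b ->]|[n ->]] Hg; simpl; auto.
  apply LR_lamV; auto. apply LR_refl.
Qed.

Lemma kh_pure_subst : forall E0 g, kh_pure_ctx E0 -> (forall n, is_val (g n)) ->
  pure_ctx (subst_ectx g E0).
Proof.
  induction E0; intros g [N Vl] Hg; simpl in *.
  - split; exact I.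
  - destruct Vl as [Hv Vl]. destruct (IHE0 g (conj N Vl) Hg) as [A B].
    split; simpl; auto. split; auto.
    destruct Hv as [[b ->]|[n ->]]; simpl; auto. eexists; eauto.
  - destruct (IHE0 g (conj N Vl) Hg) as [A B]. split; simpl; auto.
  - contradiction.
Qed.

Lemma Grel_val : forall k g0 g1, Grel k g0 g1 -> (forall n, is_val (g0 n)) /\ (forall n, is_val (g1 n)).
Proof. intros; split; intros n; apply (V_val _ _ _ (H n)). Qed.

Lemma LR_contract : forall L R,
  (forall k g0 g1, Grel k g0 g1 -> contract (subst g0 L) (subst g0 R) /\ contract (subst g1 L) (subst g1 R)) ->
  LR L R /\ LR R L.
Proof.
  intros L R H. split; intros k g0 g1 Hg; destruct (H k g0 g1 Hg) as [H0 H1].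
  - eapply E_contract_l; eauto. apply LR_refl; auto.
  - eapply E_contract_r; eauto. apply LR_refl; auto.
Qed.

Lemma ax1 : forall t v, kh_val v -> LR (App (Lam t) v) (subst0 v t) /\ LR (subst0 v t) (App (Lam t) v).
Proof.
  intros t v Hv. apply LR_contract. intros k g0 g1 Hg.
  pose proof (val_V v k g0 g1 Hv Hg) as HV. destruct (V_val _ _ _ HV) as [V0 V1].
  split; simpl; rewrite subst_subst0; constructor; auto.
Qed.

Lemma ax3 : forall E0 t, kh_pure_ctx E0 ->
  LR (Reset (plug E0 (Shift t))) (Reset (subst0 (Lam (Reset (plug (lift_ectx E0) (Var 0)))) t)) /\
  LR (Reset (subst0 (Lam (Reset (plug (lift_ectx E0) (Var 0)))) t)) (Reset (plug E0 (Shift t))).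
Proof.
  intros E0 t HE. apply LR_contract. intros k g0 g1 Hg.
  destruct (Grel_val _ _ _ Hg) as [V0 V1].
  split; simpl; rewrite subst_subst0, subst_plug; simpl; rewrite subst_cont;
  apply c_shift; apply kh_pure_subst; auto.
Qed.

Lemma ax5 : forall v, kh_val v -> LR (Reset v) v /\ LR v (Reset v).
Proof.
  intros v Hv. apply LR_contract. intros k g0 g1 Hg.
  pose proof (val_V v k g0 g1 Hv Hg) as HV. destruct (V_val _ _ _ HV) as [V0 V1].
  split; simpl; constructor; auto.
Qed.

Lemma subst_scons_lift : forall w g t, subst (scons w g) (lift t) = subst g t.
Proof. intros. unfold lift. rewrite subst_ren. apply subst_ext. reflexivity. Qed.

Lemma subst_scons_lift_ectx : forall w g F, subst_ectx (scons w g) (lift_ectx F) = subst_ectx g F.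
Proof.
  induction F; unfold lift_ectx in *; simpl; rewrite ?IHF; f_equal;
  try exact (subst_scons_lift _ _ _); reflexivity.
Qed.

Lemma subst_scons_cont : forall w g F,
  subst (scons w g) (plug (lift_ectx F) (Var 0)) = plug (subst_ectx g F) w.
Proof. intros. rewrite subst_plug, subst_scons_lift_ectx. reflexivity. Qed.

Lemma E_omega_l : forall k E0' E1' s0 s1, pure_ctx E0' -> pure_ctx E1' ->
  (forall j, j <= k -> forall w0 w1, V j w0 w1 -> E j (plug E0' w0) (plug E1' w1)) ->
  E k s0 s1 ->
  E k (App (Lam (plug (lift_ectx E0') (Var 0))) s0) (plug E1' s1).
Proof.
  intros k E0' E1' s0 s1 P0 P1 Hc Hs j Hj Ea Eb HK.
  replace (plug Ea (App (Lam (plug (lift_ectx E0') (Var 0))) s0))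
    with (plug (ecomp Ea (EAppR (Lam (plug (lift_ectx E0') (Var 0))) EHole)) s0)
    by (rewrite plug_ecomp; reflexivity).
  rewrite <- plug_ecomp.
  apply Hs; auto. pose proof HK as HK'. destruct HK' as [pa [pb _]].
  split; [apply pure_ecomp; auto; split; simpl; auto; split; [eexists; eauto|exact I]|].
  split; [apply pure_ecomp; auto|].
  intros h Hh w0 w1 Hw. rewrite !plug_ecomp. simpl.
  destruct (V_val _ _ _ Hw) as [Hv0 Hv1].
  eapply P_red_l. apply step_reset_plug; auto. constructor; auto.
  rewrite subst0_cont.
  apply (Hc h ltac:(lia) w0 w1 Hw h (le_n h) Ea Eb). eapply K_down; [|exact HK]; lia.
Qed.

Lemma E_omega_r : forall k E0' E1' s0 s1, pure_ctx E0' -> pure_ctx E1' ->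
  (forall j, j <= k -> forall w0 w1, V j w0 w1 -> E j (plug E0' w0) (plug E1' w1)) ->
  E k s0 s1 ->
  E k (plug E0' s0) (App (Lam (plug (lift_ectx E1') (Var 0))) s1).
Proof.
  intros k E0' E1' s0 s1 P0 P1 Hc Hs j Hj Ea Eb HK.
  replace (plug Eb (App (Lam (plug (lift_ectx E1') (Var 0))) s1))
    with (plug (ecomp Eb (EAppR (Lam (plug (lift_ectx E1') (Var 0))) EHole)) s1)
    by (rewrite plug_ecomp; reflexivity).
  rewrite <- plug_ecomp.
  apply Hs; auto. pose proof HK as HK'. destruct HK' as [pa [pb _]].
  split; [apply pure_ecomp; auto|].
  split; [apply pure_ecomp; auto; split; simpl; auto; split; [eexists; eauto|exact I]|].
  intros h Hh w0 w1 Hw. rewrite !plug_ecomp. simpl.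
  destruct (V_val _ _ _ Hw) as [Hv0 Hv1].
  eapply P_red_r. apply steps_one, step_reset_plug; auto. constructor; auto.
  rewrite subst0_cont.
  apply (Hc h ltac:(lia) w0 w1 Hw h (le_n h) Ea Eb). eapply K_down; [|exact HK]; lia.
Qed.

Lemma ax2 : forall E0 t, kh_pure_ctx E0 ->
  LR (App (Lam (plug (lift_ectx E0) (Var 0))) t) (plug E0 t) /\
  LR (plug E0 t) (App (Lam (plug (lift_ectx E0) (Var 0))) t).
Proof.
  intros E0 t HE. split; intros k g0 g1 Hg; destruct (Grel_val _ _ _ Hg) as [V0 V1];
  simpl; rewrite ?subst_cont, ?subst_plug.
  - apply E_omega_l; try apply kh_pure_subst; auto.
    + intros j Hj w0 w1 Hw. rewrite <- !subst_scons_cont. apply LR_refl.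
      apply Grel_scons; auto. eapply Grel_down; eauto.
    + apply LR_refl; auto.
  - apply E_omega_r; try apply kh_pure_subst; auto.
    + intros j Hj w0 w1 Hw. rewrite <- !subst_scons_cont. apply LR_refl.
      apply Grel_scons; auto. eapply Grel_down; eauto.
    + apply LR_refl; auto.
Qed.

Ltac pe := repeat (simpl; rewrite ?plug_ecomp); reflexivity.

Lemma eval_reset_pure : forall Ea X, pure_ctx Ea -> eval_ctx X -> eval_ctx (EReset (ecomp Ea X)).
Proof. intros Ea X [_ Ha] HX. unfold eval_ctx; simpl. apply vals_ok_ecomp; auto. Qed.

Lemma E_rl_l : forall k a0 a1 u0 u1,
  (forall j, j <= k -> forall w0 w1, V j w0 w1 -> E j (subst0 w0 a0) (subst0 w1 a1)) ->
  E k u0 u1 ->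
  E k (Reset (App (Lam a0) (Reset u0))) (App (Lam (Reset a1)) (Reset u1)).
Proof.
  intros k a0 a1 u0 u1 Ha Hu j Hj Ea Eb HK i Hi F0 F1 HM.
  replace (plug F0 (Reset (plug Ea (Reset (App (Lam a0) (Reset u0))))))
    with (plug (ecomp F0 (EReset (ecomp Ea (EReset (EAppR (Lam a0) EHole))))) (Reset u0))
    by pe.
  replace (plug F1 (Reset (plug Eb (App (Lam (Reset a1)) (Reset u1)))))
    with (plug (ecomp F1 (EReset (ecomp Eb (EAppR (Lam (Reset a1)) EHole)))) (Reset u1))
    by pe.
  apply (E_P j u0 u1 (E_down k j u0 u1 Hj Hu) i Hi).
  pose proof HK as HK'. destruct HK' as [pa [pb _]].
  pose proof HM as HM'. destruct HM' as [HF0 [HF1 _]].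
  split; [apply eval_ecomp; auto; apply eval_reset_pure; auto; split; [eexists; eauto|exact I]|].
  split; [apply eval_ecomp; auto; apply eval_reset_pure; auto; split; [eexists; eauto|exact I]|].
  intros h Hh w0 w1 Hw. destruct (V_val _ _ _ Hw) as [Hv0 Hv1].
  replace (plug (ecomp F0 (EReset (ecomp Ea (EReset (EAppR (Lam a0) EHole))))) w0)
    with (plug (ecomp F0 (EReset (ecomp Ea (EReset EHole)))) (App (Lam a0) w0))
    by pe.
  replace (plug (ecomp F1 (EReset (ecomp Eb (EAppR (Lam (Reset a1)) EHole)))) w1)
    with (plug (ecomp F1 (EReset Eb)) (App (Lam (Reset a1)) w1))
    by pe.
  eapply O_red_l. apply step_plug. apply eval_ecomp; auto; apply eval_reset_pure; auto; exact I.
  apply contract_step; constructor; auto.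
  eapply O_red_r. apply steps_plug. apply eval_ecomp; auto; apply pb.
  apply steps_one, contract_step; constructor; auto.
  repeat (simpl; rewrite ?plug_ecomp).
  assert (HR : E h (Reset (subst0 w0 a0)) (Reset (subst0 w1 a1))).
  { apply E_reset. apply Ha; auto; lia. }
  exact (HR h (le_n h) Ea Eb (K_down j h Ea Eb ltac:(lia) HK) h (le_n h) F0 F1
    (M_down i h F0 F1 ltac:(lia) HM)).
Qed.

Lemma E_rl_r : forall k a0 a1 u0 u1,
  (forall j, j <= k -> forall w0 w1, V j w0 w1 -> E j (subst0 w0 a0) (subst0 w1 a1)) ->
  E k u0 u1 ->
  E k (App (Lam (Reset a0)) (Reset u0)) (Reset (App (Lam a1) (Reset u1))).
Proof.
  intros k a0 a1 u0 u1 Ha Hu j Hj Ea Eb HK i Hi F0 F1 HM.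
  replace (plug F1 (Reset (plug Eb (Reset (App (Lam a1) (Reset u1))))))
    with (plug (ecomp F1 (EReset (ecomp Eb (EReset (EAppR (Lam a1) EHole))))) (Reset u1))
    by pe.
  replace (plug F0 (Reset (plug Ea (App (Lam (Reset a0)) (Reset u0)))))
    with (plug (ecomp F0 (EReset (ecomp Ea (EAppR (Lam (Reset a0)) EHole)))) (Reset u0))
    by pe.
  apply (E_P j u0 u1 (E_down k j u0 u1 Hj Hu) i Hi).
  pose proof HK as HK'. destruct HK' as [pa [pb _]].
  pose proof HM as HM'. destruct HM' as [HF0 [HF1 _]].
  split; [apply eval_ecomp; auto; apply eval_reset_pure; auto; split; [eexists; eauto|exact I]|].
  split; [apply eval_ecomp; auto; apply eval_reset_pure; auto; split; [eexists; eauto|exact I]|].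
  intros h Hh w0 w1 Hw. destruct (V_val _ _ _ Hw) as [Hv0 Hv1].
  replace (plug (ecomp F1 (EReset (ecomp Eb (EReset (EAppR (Lam a1) EHole))))) w1)
    with (plug (ecomp F1 (EReset (ecomp Eb (EReset EHole)))) (App (Lam a1) w1))
    by pe.
  replace (plug (ecomp F0 (EReset (ecomp Ea (EAppR (Lam (Reset a0)) EHole)))) w0)
    with (plug (ecomp F0 (EReset Ea)) (App (Lam (Reset a0)) w0))
    by pe.
  eapply O_red_r. apply steps_plug. apply eval_ecomp; auto; apply eval_reset_pure; auto; exact I.
  apply steps_one, contract_step; constructor; auto.
  eapply O_red_l. apply step_plug. apply eval_ecomp; auto; apply pa.
  apply contract_step; constructor; auto.
  repeat (simpl; rewrite ?plug_ecomp).
  assert (HR : E h (Reset (subst0 w0 a0)) (Reset (subst0 w1 a1))).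
  { apply E_reset. apply Ha; auto; lia. }
  exact (HR h (le_n h) Ea Eb (K_down j h Ea Eb ltac:(lia) HK) h (le_n h) F0 F1
    (M_down i h F0 F1 ltac:(lia) HM)).
Qed.

Lemma ax4 : forall t0 t1,
  LR (Reset (App (Lam t0) (Reset t1))) (App (Lam (Reset t0)) (Reset t1)) /\
  LR (App (Lam (Reset t0)) (Reset t1)) (Reset (App (Lam t0) (Reset t1))).
Proof.
  intros t0 t1. split; intros k g0 g1 Hg; simpl.
  - apply E_rl_l. intros j Hj w0 w1 Hw. rewrite !subst0_up. apply LR_refl.
    apply Grel_scons; auto. eapply Grel_down; eauto. apply LR_refl; auto.
  - apply E_rl_r. intros j Hj w0 w1 Hw. rewrite !subst0_up. apply LR_refl.
    apply Grel_scons; auto. eapply Grel_down; eauto. apply LR_refl; auto.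
Qed.

Lemma ax6 : forall t, LR (Shift (Reset t)) (Shift t) /\ LR (Shift t) (Shift (Reset t)).
Proof.
  intros t. split; intros k g0 g1 Hg; simpl; intros j Hj E0 E1 HK.
  - eapply P_red_l. apply contract_step, c_shift; apply HK.
    eapply P_red_r. apply steps_one, contract_step, c_shift; apply HK.
    change (P j (Reset (Reset (subst0 (Lam (Reset (plug (lift_ectx E0) (Var 0)))) (subst (up g0) t))))
                (Reset (subst0 (Lam (Reset (plug (lift_ectx E1) (Var 0)))) (subst (up g1) t)))).
    apply P_reset_l. apply E_P. rewrite !subst0_up. apply LR_refl.
    apply Grel_scons. apply cont_V; auto. eapply Grel_down; eauto.
  - eapply P_red_l. apply contract_step, c_shift; apply HK.
    eapply P_red_r. apply steps_one, contract_step, c_shift; apply HK.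
    change (P j (Reset (subst0 (Lam (Reset (plug (lift_ectx E0) (Var 0)))) (subst (up g0) t)))
                (Reset (Reset (subst0 (Lam (Reset (plug (lift_ectx E1) (Var 0)))) (subst (up g1) t))))).
    apply P_reset_r. apply E_P. rewrite !subst0_up. apply LR_refl.
    apply Grel_scons. apply cont_V; auto. eapply Grel_down; eauto.
Qed.

Lemma eta_l : forall k w0 w1, V k w0 w1 -> V k (Lam (App (lift w0) (Var 0))) w1.
Proof.
  induction k; intros w0 w1 Hw.
  - destruct (V_val _ _ _ Hw) as [_ H1]. unfold V; simpl. split; auto. eexists; eauto.
  - apply V_S. split. apply IHk. eapply V_down; [|exact Hw]; lia.
    intros b0 b1 e0 e1 x0 x1 Hx. injection e0; intros <-. subst w1.
    change (E k (App (subst0 x0 (lift w0)) x0) (subst0 x1 b1)). rewrite subst0_lift.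
    destruct (V_val _ _ _ Hw) as [[c0 ->] _]. destruct (V_val _ _ _ Hx) as [Hx0 _].
    eapply E_contract_l. constructor; auto.
    apply V_S in Hw. destruct Hw as [_ Hw]. apply (Hw c0 b1 eq_refl eq_refl); auto.
Qed.

Lemma eta_r : forall k w0 w1, V k w0 w1 -> V k w0 (Lam (App (lift w1) (Var 0))).
Proof.
  induction k; intros w0 w1 Hw.
  - destruct (V_val _ _ _ Hw) as [H0 _]. unfold V; simpl. split; auto. eexists; eauto.
  - apply V_S. split. apply IHk. eapply V_down; [|exact Hw]; lia.
    intros b0 b1 e0 e1 x0 x1 Hx. injection e1; intros <-. subst w0.
    change (E k (subst0 x0 b0) (App (subst0 x1 (lift w1)) x1)). rewrite subst0_lift.
    destruct (V_val _ _ _ Hw) as [_ [c1 ->]]. destruct (V_val _ _ _ Hx) as [_ Hx1].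
    eapply E_contract_r. constructor; auto.
    apply V_S in Hw. destruct Hw as [_ Hw]. apply (Hw b0 c1 eq_refl eq_refl); auto.
Qed.

Lemma ax7 : forall v, kh_val v -> LR (Lam (App (lift v) (Var 0))) v /\ LR v (Lam (App (lift v) (Var 0))).
Proof.
  intros v Hv. split; intros k g0 g1 Hg; apply V_E;
  change (subst ?g (Lam (App (lift v) (Var 0)))) with (Lam (App (subst (up g) (lift v)) (Var 0)));
  rewrite ?subst_up_lift.
  - apply eta_l, val_V; auto.
  - apply eta_r, val_V; auto.
Qed.

Lemma ax8 : forall t, LR (Shift (App (Var 0) (lift t))) t /\ LR t (Shift (App (Var 0) (lift t))).
Proof.
  intros t. split; intros k g0 g1 Hg;
  change (subst ?g (Shift (App (Var 0) (lift t)))) with (Shift (App (Var 0) (subst (up g) (lift t))));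
  rewrite ?subst_up_lift; pose proof (LR_refl t k g0 g1 Hg) as Ht;
  intros j Hj Ea Eb HK; pose proof HK as HK'; destruct HK' as [pa [pb HKc]].
  - eapply P_red_l. apply contract_step, c_shift; apply HK.
    change (P j (Reset (App (Lam (Reset (plug (lift_ectx Ea) (Var 0))))
                     (subst0 (Lam (Reset (plug (lift_ectx Ea) (Var 0)))) (lift (subst g0 t)))))
                (Reset (plug Eb (subst g1 t)))).
    rewrite subst0_lift.
    apply (Ht j Hj (EAppR (Lam (Reset (plug (lift_ectx Ea) (Var 0)))) EHole) Eb).
    split; [split; simpl; auto; split; [eexists; eauto|exact I]|split; auto].
    intros h Hh w0 w1 Hw. destruct (V_val _ _ _ Hw) as [Hv0 Hv1]. simpl.
    eapply P_red_l. apply (step_reset_plug EHole). split; exact I. constructor; auto.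
    simpl. change (P h (Reset (Reset (subst0 w0 (plug (lift_ectx Ea) (Var 0))))) (Reset (plug Eb w1))).
    rewrite subst0_cont. apply P_reset_l. apply HKc; auto.
  - eapply P_red_r. apply steps_one, contract_step, c_shift; apply HK.
    change (P j (Reset (plug Ea (subst g0 t)))
                (Reset (App (Lam (Reset (plug (lift_ectx Eb) (Var 0))))
                     (subst0 (Lam (Reset (plug (lift_ectx Eb) (Var 0)))) (lift (subst g1 t)))))).
    rewrite subst0_lift.
    apply (Ht j Hj Ea (EAppR (Lam (Reset (plug (lift_ectx Eb) (Var 0)))) EHole)).
    split; [auto|split; [split; simpl; auto; split; [eexists; eauto|exact I]|]].
    intros h Hh w0 w1 Hw. destruct (V_val _ _ _ Hw) as [Hv0 Hv1]. simpl.
    eapply P_red_r. apply steps_one, (step_reset_plug EHole). split; exact I. constructor; auto.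
    simpl. change (P h (Reset (plug Ea w0)) (Reset (Reset (subst0 w1 (plug (lift_ectx Eb) (Var 0)))))).
    rewrite subst0_cont. apply P_reset_r. apply HKc; auto.
Qed.

Inductive ctx : Type :=
| CHole
| CLam (c : ctx)
| CAppL (c : ctx) (t : term)
| CAppR (t : term) (c : ctx)
| CShift (c : ctx)
| CReset (c : ctx).

Fixpoint cplug (C : ctx) (t : term) : term :=
  match C with
  | CHole => t
  | CLam c => Lam (cplug c t)
  | CAppL c u => App (cplug c t) u
  | CAppR u c => App u (cplug c t)
  | CShift c => Shift (cplug c t)
  | CReset c => Reset (cplug c t)
  end.

Fixpoint ccomp (C D : ctx) : ctx :=
  match C with
  | CHole => D
  | CLam c => CLam (ccomp c D)
  | CAppL c u => CAppL (ccomp c D) u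
  | CAppR u c => CAppR u (ccomp c D)
  | CShift c => CShift (ccomp c D)
  | CReset c => CReset (ccomp c D)
  end.

Lemma cplug_ccomp : forall C D t, cplug (ccomp C D) t = cplug C (cplug D t).
Proof. induction C; intros; simpl; f_equal; auto. Qed.

Lemma LR_ctx : forall C t0 t1, LR t0 t1 -> LR (cplug C t0) (cplug C t1).
Proof.
  induction C; intros; simpl; auto using LR_lam, LR_app, LR_shift, LR_reset, LR_refl.
Qed.

Definition idg : nat -> term := fun _ => Lam (Var 0).

Lemma V_id : forall k, V k (Lam (Var 0)) (Lam (Var 0)).
Proof.
  induction k.
  - unfold V; simpl; split; eexists; eauto.
  - apply V_S. split; auto. intros b0 b1 e0 e1 w0 w1 Hw.
    injection e0; injection e1; intros <- <-. change (E k w0 w1). apply V_E; auto.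
Qed.

Definition ctx_approx (t0 t1 : term) : Prop :=
  forall C, obs (Reset (subst idg (cplug C t0))) -> obs (Reset (subst idg (cplug C t1))).

Lemma LR_sound : forall t0 t1, LR t0 t1 -> ctx_approx t0 t1.
Proof.
  intros t0 t1 H C [v [Hs Hv]]. destruct (steps_nsteps _ _ Hs) as [n Hn].
  assert (HE : E (S n) (subst idg (cplug C t0)) (subst idg (cplug C t1))).
  { apply LR_ctx; auto. intros m; apply V_id. }
  apply E_P in HE.
  exact (HE (S n) (le_n _) EHole EHole (M_hole _) n v (le_n _) Hn Hv).
Qed.

Lemma ctx_refl : forall t, ctx_approx t t.
Proof. unfold ctx_approx; auto. Qed.

Lemma ctx_trans : forall a b c, ctx_approx a b -> ctx_approx b c -> ctx_approx a c.
Proof. unfold ctx_approx; auto. Qed.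

Lemma ctx_cong : forall D t u, ctx_approx t u -> ctx_approx (cplug D t) (cplug D u).
Proof.
  unfold ctx_approx; intros D t u H C. rewrite <- !cplug_ccomp. apply H.
Qed.

Lemma cps_sound : forall t u, cps_eq t u -> ctx_approx t u /\ ctx_approx u t.
Proof.
  intros t u H; induction H.
  - split; apply ctx_refl.
  - tauto.
  - split; eapply ctx_trans; try apply IHcps_eq1; try apply IHcps_eq2.
  - split; apply (ctx_cong (CLam CHole)); apply IHcps_eq.
  - destruct IHcps_eq1 as [A1 B1]; destruct IHcps_eq2 as [A2 B2]. split.
    + apply ctx_trans with (App t' u).
      apply (ctx_cong (CAppL CHole u)); auto. apply (ctx_cong (CAppR t' CHole)); auto.
    + apply ctx_trans with (App t' u).
      apply (ctx_cong (CAppR t' CHole)); auto. apply (ctx_cong (CAppL CHole u)); auto.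
  - split; apply (ctx_cong (CShift CHole)); apply IHcps_eq.
  - split; apply (ctx_cong (CReset CHole)); apply IHcps_eq.
  - destruct (ax1 t v H); split; apply LR_sound; auto.
  - destruct (ax2 _ t H); split; apply LR_sound; auto.
  - destruct (ax3 _ t H); split; apply LR_sound; auto.
  - destruct (ax4 t0 t1); split; apply LR_sound; auto.
  - destruct (ax5 v H); split; apply LR_sound; auto.
  - destruct (ax6 t); split; apply LR_sound; auto.
  - destruct (ax7 v H); split; apply LR_sound; auto.
  - destruct (ax8 t); split; apply LR_sound; auto.
Qed.

Lemma closed_at_ren : forall t k k' xi, closed_at k t -> (forall n, n < k -> xi n < k') ->
  closed_at k' (ren xi t).
Proof.
  induction t; intros k k' xi H Hxi; simpl in *; try tauto.
  - apply Hxi; auto.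
  - apply (IHt (S k)); auto. intros [|n] Hn; simpl; try lia. specialize (Hxi n); lia.
  - destruct H; split; eauto.
  - apply (IHt (S k)); auto. intros [|n] Hn; simpl; try lia. specialize (Hxi n); lia.
  - eauto.
Qed.

Lemma closed_lift : forall k t, closed_at k t -> closed_at (S k) (lift t).
Proof. intros. eapply closed_at_ren; eauto. intros; lia. Qed.

Lemma closed_at_subst : forall t k k' s, closed_at k t -> (forall n, n < k -> closed_at k' (s n)) ->
  closed_at k' (subst s t).
Proof.
  induction t; intros k k' s H Hs; simpl in *; try tauto.
  - apply Hs; auto.
  - apply (IHt (S k)); auto. intros [|n] Hn; simpl; try lia. apply closed_lift, Hs; lia.
  - destruct H; split; eauto.
  - apply (IHt (S k)); auto. intros [|n] Hn; simpl; try lia. apply closed_lift, Hs; lia.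
  - eauto.
Qed.



Lemma ren_id : forall t xi, (forall n, xi n = n) -> ren xi t = t.
Proof.
  induction t; intros xi H; simpl; f_equal; auto; apply IHt; intros [|n]; simpl; auto.
Qed.

Lemma closed_at_mono : forall t k k', closed_at k t -> k <= k' -> closed_at k' t.
Proof.
  intros t k k' H Hk. rewrite <- (ren_id t (fun n => n)); auto.
  eapply closed_at_ren; eauto. intros; lia.
Qed.

Lemma subst_closed : forall t k s, closed_at k t -> (forall n, n < k -> s n = Var n) -> subst s t = t.
Proof.
  induction t; intros k s H Hs; simpl in *.
  - apply Hs; auto.
  - f_equal. apply (IHt (S k)); auto. intros [|n] Hn; simpl; auto. rewrite Hs; auto; lia.
  - destruct H; f_equal; eauto.
  - f_equal. apply (IHt (S k)); auto. intros [|n] Hn; simpl; auto. rewrite Hs; auto; lia.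
  - f_equal; eauto.
Qed.

Lemma closed_fvbound : forall t, closed_at (fvbound t) t.
Proof.
  induction t; simpl; auto.
  - eapply closed_at_mono; eauto. lia.
  - split; eapply closed_at_mono; eauto; lia.
  - eapply closed_at_mono; eauto. lia.
Qed.

Lemma closed_lams : forall n k t, closed_at (n + k) t -> closed_at k (lams n t).
Proof.
  induction n; intros k t H; simpl in *; auto.
  apply IHn. replace (n + S k) with (S (n + k)) by lia. auto.
Qed.

Lemma cps_lams : forall n t u, cps_eq t u -> cps_eq (lams n t) (lams n u).
Proof. induction n; intros; simpl; auto. apply ce_lam; apply IHn; auto. Qed.

Fixpoint closed_ectx (k : nat) (F : ectx) : Prop :=
  match F with
  | EHole => True
  | EAppR v F => closed_at k v /\ closed_ectx k F
  | EAppL F u => closed_ectx k F /\ closed_at k u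
  | EReset F => closed_ectx k F
  end.

Lemma closed_plug : forall F k t, closed_at k (plug F t) <-> closed_ectx k F /\ closed_at k t.
Proof. induction F; intros; simpl; try rewrite IHF; tauto. Qed.

Lemma closed_lift_ectx : forall F k, closed_ectx k F -> closed_ectx (S k) (lift_ectx F).
Proof.
  induction F; intros k H; unfold lift_ectx in *; simpl in *; intuition; try apply closed_lift; auto.
Qed.

Lemma contract_closed : forall a b k, contract a b -> closed_at k a -> closed_at k b.
Proof.
  intros a b k Hc Ha. destruct Hc.
  - simpl in Ha. destruct Ha as [Ht Hv]. eapply closed_at_subst; eauto.
    intros [|n] Hn; simpl; auto; lia.
  - simpl in *. apply closed_plug in Ha. destruct Ha as [HE Ht]. simpl in Ht.
    eapply closed_at_subst; eauto. intros [|n] Hn; simpl.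
    + apply closed_plug. split. apply closed_lift_ectx; auto. simpl; lia.
    + lia.
  - auto.
Qed.

Lemma step_closed : forall a b, step a b -> closed a -> closed b.
Proof.
  intros a b H Ha. destruct H. unfold closed in *. apply closed_plug in Ha. apply closed_plug.
  destruct Ha; split; auto. eapply contract_closed; eauto.
Qed.

Lemma steps_closed : forall a b, steps a b -> closed a -> closed b.
Proof. intros a b H; induction H; auto. intros; apply IHsteps. eapply step_closed; eauto. Qed.

Lemma prog_step : forall p p', is_program p -> step p p' -> is_program p' \/ is_val p'.
Proof.
  intros p p' [q ->] H. inversion H as [F a b HF Hc E1 E2]; subst.
  destruct F; simpl in *.
  - destruct Hc.
    + discriminate.
    + left; eexists; eauto.
    + right; auto.
  - discriminate.
  - discriminate.
  - left; eexists; eauto.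
Qed.

Lemma reset_obs : forall a w, steps a w -> is_val w -> forall p, a = Reset p ->
  is_program p \/ is_val p -> obs p.
Proof.
  intros a w H; induction H; intros Hw p Ha Hp.
  - subst. destruct Hw; discriminate.
  - subst. inversion H as [F x y HF Hc E1 E2]; subst.
    destruct F; simpl in *.
    + subst. inversion Hc; subst.
      * match goal with H : pure_ctx ?E |- _ => destruct H as [N _];
          destruct Hp as [[q Hq]|[b Hb]]; destruct E; simpl in *; try discriminate; contradiction end.
      * eexists; split; [constructor|assumption].
    + discriminate.
    + discriminate.
    + injection E1; intros <-.
      assert (Hs : step (plug F x) (plug F y)) by (apply step_plug; auto; apply contract_step; auto).
      destruct Hp as [Hp|Hp].
      * destruct (IHsteps Hw (plug F y) eq_refl (prog_step _ _ Hp Hs)) as [v [Hv1 Hv2]].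
        exists v; split; auto. econstructor; eauto.
      * exfalso; eapply val_nostep; eauto.
Qed.

Lemma cps_adequate : forall p0 p1, cps_eq p0 p1 -> closed p0 -> closed p1 ->
  is_program p1 -> obs p0 -> obs p1.
Proof.
  intros p0 p1 H C0 C1 P1 [v [Hs Hv]].
  destruct (cps_sound _ _ H) as [A _].
  specialize (A CHole). simpl in A.
  rewrite !(subst_closed _ 0) in A; auto; try (intros; lia).
  assert (Ho : obs (Reset p1)).
  { apply A. exists v. split; auto. apply steps_trans with (Reset v).
    apply (steps_plug (EReset EHole)); auto. exact I.
    apply steps_one, contract_step; constructor; auto. }
  destruct Ho as [w [Hw1 Hw2]]. eapply reset_obs; eauto.
Qed.

Definition envOK (Ev : rel) : Prop :=
  forall a b, Ev a b -> is_val a /\ closed a /\ is_val b /\ closed b /\ cps_eq a b.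

Definition Xcps : env_relation := {|
  envs := envOK;
  trip := fun Ev t0 t1 => envOK Ev /\ closed t0 /\ closed t1 /\ cps_eq t0 t1 |}.

Lemma clo_cps : forall Ev t u, envOK Ev -> ctx_clo Ev t u -> cps_eq t u.
Proof.
  intros Ev t u HE H; induction H; auto using ce_refl, ce_lam, ce_app, ce_shift, ce_reset.
  apply HE; auto.
Qed.

Lemma hat_props : forall Ev E0 E1, envOK Ev -> hat Ev E0 E1 ->
  closed_ectx 0 E0 /\ closed_ectx 0 E1 /\
  forall a b, cps_eq a b -> cps_eq (plug E0 a) (plug E1 b).
Proof.
  intros Ev E0 E1 HE H; induction H; simpl.
  - auto.
  - destruct IHhat as [A [B C]]. destruct H2 as [H2 [H3 H4]].
    repeat split; auto. intros. apply ce_app; auto. eapply clo_cps; eauto.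
  - destruct IHhat as [A [B C]]. destruct H0 as [H2 [H3 H4]].
    repeat split; auto. intros. apply ce_app; auto. eapply clo_cps; eauto.
  - destruct IHhat as [A [B C]]. repeat split; auto. intros. apply ce_reset; auto.
Qed.

Lemma Xcps_bisim : env_bisim Xcps.
Proof.
  split; [|split; [|split]].
  - split.
    + intros Ev HE a b Hab. destruct (HE a b Hab) as [A [B [C [D _]]]]; tauto.
    + intros Ev t0 t1 [HE [C0 [C1 _]]].
      split; [intros x y Hab; destruct (HE x y Hab) as [A [B [C [D _]]]]; tauto|tauto].
  - intros Ev t0 t1 [HE [C0 [C1 Hc]]] _ E0 E1 _ _ Hh.
    destruct (hat_props _ _ _ HE Hh) as [A [B Cc]].
    simpl. split; [exact HE|]. unfold closed; simpl.
    split; [apply closed_plug; auto|split; [apply closed_plug; auto|apply ce_reset; auto]].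
  - intros Ev p0 p1 [HE [C0 [C1 Hc]]] Pp0 Pp1. simpl. split; [|split; [|split]].
    + intros p0' Hs Pp0'. exists p1. split; [constructor|split; auto].
      split; [exact HE|split; [eapply step_closed; eauto|split; [exact C1|]]].
      eapply ce_trans; [apply ce_sym, step_cps; eauto|auto].
    + intros v0 Hs Hv0.
      destruct (cps_adequate p0 p1 Hc C0 C1 Pp1) as [v1 [Hs1 Hv1]].
      { exists v0; split; auto. apply steps_one; auto. }
      exists v1. split; [exact Hs1|split; [exact Hv1|]].
      intros a b [[-> ->]|Hab]; [|apply HE; auto].
      split; [exact Hv0|split; [eapply step_closed; eauto|split; [exact Hv1|split; [eapply steps_closed; eauto|]]]].
      eapply ce_trans; [apply ce_sym, step_cps; eauto|].
      eapply ce_trans; [exact Hc|]. apply steps_cps; auto.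
    + intros p1' Hs Pp1'. exists p0. split; [constructor|split; auto].
      split; [exact HE|split; [exact C0|split; [eapply step_closed; eauto|]]].
      eapply ce_trans; [exact Hc|]. apply step_cps; auto.
    + intros v1 Hs Hv1.
      destruct (cps_adequate p1 p0 (ce_sym _ _ Hc) C1 C0 Pp0) as [v0 [Hs0 Hv0]].
      { exists v1; split; auto. apply steps_one; auto. }
      exists v0. split; [exact Hs0|split; [exact Hv0|]].
      intros a b [[-> ->]|Hab]; [|apply HE; auto].
      split; [exact Hv0|split; [eapply steps_closed; eauto|split; [exact Hv1|split; [eapply step_closed; eauto|]]]].
      eapply ce_trans; [apply ce_sym, steps_cps; eauto|].
      eapply ce_trans; [exact Hc|]. apply step_cps; auto.
  - intros Ev t0 t1 v0 v1 HE Hl Hv0 Hv1 [Ht [Cv0 Cv1]]. simpl in *.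
    destruct (HE _ _ Hl) as [_ [Cl0 [_ [Cl1 Hc]]]].
    split; [exact HE|split; [|split]].
    + eapply closed_at_subst; [exact Cl0|]. intros [|n] Hn; simpl; auto; lia.
    + eapply closed_at_subst; [exact Cl1|]. intros [|n] Hn; simpl; auto; lia.
    + eapply ce_trans; [apply ce_sym, ax_beta_v; left; auto|].
      eapply ce_trans; [|apply ax_beta_v; left; auto].
      apply ce_app; auto. eapply clo_cps; eauto.
Qed.

Theorem corollary3 : forall t0 t1 : term,
  cps_eq t0 t1 -> open_ext bisim_p_empty t0 t1.
Proof.
  intros t0 t1 H. unfold open_ext, bisim_p_empty, bisim_p.
  exists Xcps. split; [apply Xcps_bisim|]. simpl.
  split; [intros a b []|]. split; [|split].
  - unfold closed. apply closed_lams. rewrite Nat.add_0_r.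
    eapply closed_at_mono; [apply closed_fvbound|]. lia.
  - unfold closed. apply closed_lams. rewrite Nat.add_0_r.
    eapply closed_at_mono; [apply closed_fvbound|]. lia.
  - apply cps_lams; auto.
Qed.
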